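(* Let $n,m\ge1$ and fix parameters $\alpha_k>0$, $v_k\in\mathbb{S}^{n-1}$, $b_k\in\mathbb{R}$, $k=1,\dots,m$. For $K<0$ and $x$ in the relevant model, let $u_k(x)=-\alpha_kB^{v_k}(x)+b_k$. (Poincaré) Fix $x\in\mathbb{R}^n$ (which lies in $\mathbb{P}^n_K$ for $|K|$ small) and let $y=\frac{\omega}{1+\sqrt{1-K\|\omega\|^2}}\in\mathbb{P}^m_K$ with $\omega_k=\frac{\sinh(\sqrt{-K}u_k(x))}{\sqrt{-K}}$. Then as $K\to0^-$, $y_k\to\alpha_k\langle v_k,x\rangle+\tfrac12 b_k$ for each $k$. (Lorentz) Fix $x_s\in\mathbb{R}^n$, let $x=[x_t,x_s^\top]^\top\in\mathbb{L}^n_K$ with $x_t=\sqrt{-1/K+\|x_s\|^2}$, and let $y_s=\frac{1}{\sqrt{-K}}\sinh(\sqrt{-K}\,u(x))$ (entrywise), $y_t=\sqrt{-1/K+\|y_s\|^2}$. Then as $K\to0^-$, $(y_s)_k\to\alpha_k\langle v_k,x_s\rangle+b_k$ for each $k$.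
   Context: $\mathbb{P}^n_K=\{x\in\mathbb{R}^n:\|x\|^2<-1/K\}$ with Busemann function $B^v(x)=\frac{1}{\sqrt{-K}}\log\frac{\|v-\sqrt{-K}x\|^2}{1+K\|x\|^2}$; $\mathbb{L}^n_K=\{x=[x_t,x_s^\top]^\top\in\mathbb{R}^{n+1}:-x_t^2+\|x_s\|^2=1/K,\ x_t>0\}$ with Busemann function $B^v(x)=\frac{1}{\sqrt{-K}}\log(\sqrt{-K}(x_t-\langle x_s,v\rangle))$; $\mathbb{S}^{n-1}$ is the Euclidean unit sphere and $u(x)=(u_1(x),\dots,u_m(x))^\top$. *)

(* Defs.v *)
From HB Require Import structures.
From mathcomp Require Import all_boot all_order all_algebra.
From mathcomp Require Import all_classical all_reals all_analysis.
Set Implicit Arguments. Unset Strict Implicit. Unset Printing Implicit Defensive.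
Import Order.TTheory GRing.Theory Num.Theory.
Local Open Scope ring_scope.

Definition dotv {R : realType} {n : nat} (x y : 'rV[R]_n) : R :=
  \sum_(i < n) x ord0 i * y ord0 i.
Definition sqnorm {R : realType} {n : nat} (x : 'rV[R]_n) : R := dotv x x.

Definition sinh {R : realType} (t : R) : R := (expR t - expR (- t)) / 2.

Definition busemannP {R : realType} {n : nat} (K : R) (v x : 'rV[R]_n) : R :=
  (Num.sqrt (- K))^-1 *
  ln (sqnorm (v - Num.sqrt (- K) *: x) / (1 + K * sqnorm x)).

Definition busemannL {R : realType} {n : nat} (K : R) (v : 'rV[R]_n)
  (xt : R) (xs : 'rV[R]_n) : R :=
  (Num.sqrt (- K))^-1 * ln (Num.sqrt (- K) * (xt - dotv xs v)).

Definition uP {R : realType} {n m : nat} (alpha b : 'I_m -> R)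
  (v : 'I_m -> 'rV[R]_n) (K : R) (x : 'rV[R]_n) (k : 'I_m) : R :=
  - alpha k * busemannP K (v k) x + b k.

Definition uL {R : realType} {n m : nat} (alpha b : 'I_m -> R)
  (v : 'I_m -> 'rV[R]_n) (K : R) (xt : R) (xs : 'rV[R]_n) (k : 'I_m) : R :=
  - alpha k * busemannL K (v k) xt xs + b k.

Definition omegaP {R : realType} {n m : nat} (alpha b : 'I_m -> R)
  (v : 'I_m -> 'rV[R]_n) (K : R) (x : 'rV[R]_n) : 'rV[R]_m :=
  \row_k (sinh (Num.sqrt (- K) * uP alpha b v K x k) / Num.sqrt (- K)).
Definition yP {R : realType} {n m : nat} (alpha b : 'I_m -> R)
  (v : 'I_m -> 'rV[R]_n) (K : R) (x : 'rV[R]_n) : 'rV[R]_m :=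
  (1 + Num.sqrt (1 - K * sqnorm (omegaP alpha b v K x)))^-1
    *: omegaP alpha b v K x.

Definition timeL {R : realType} {n : nat} (K : R) (xs : 'rV[R]_n) : R :=
  Num.sqrt (- K^-1 + sqnorm xs).
Definition ysL {R : realType} {n m : nat} (alpha b : 'I_m -> R)
  (v : 'I_m -> 'rV[R]_n) (K : R) (xs : 'rV[R]_n) : 'rV[R]_m :=
  \row_k (sinh (Num.sqrt (- K) * uL alpha b v K (timeL K xs) xs k)
          / Num.sqrt (- K)).
Definition ytL {R : realType} {n m : nat} (alpha b : 'I_m -> R)
  (v : 'I_m -> 'rV[R]_n) (K : R) (xs : 'rV[R]_n) : R :=
  timeL K (ysL alpha b v K xs).

(* Main.v *)
Set Warnings "-all".
Require Import Defs.
From HB Require Import structures.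
From mathcomp Require Import all_boot all_order all_algebra.
From mathcomp Require Import all_classical all_reals all_analysis.
From mathcomp Require Import ring lra.
Import Order.TTheory GRing.Theory Num.Theory.
Import numFieldTopology.Exports numFieldNormedType.Exports.
Local Open Scope ring_scope.
Local Open Scope classical_set_scope.

Section S.
Variable R : realType.

Lemma ln_quot : h^-1 * ln (1 + h) @[h --> (0:R)^'] --> (1:R).
Proof.
have D : is_derive (1:R) 1 (@ln R) (1^-1) by apply: is_derive1_ln.
have := @ex_derive _ _ _ _ _ _ _ D.
rewrite /derivable => /cvg_ex [l Hl].
have E : l = 1.
  have := @derive_val _ _ _ _ _ _ _ D. rewrite invr1 => <-.
  rewrite /derive. by rewrite (cvg_lim _ Hl).
move: Hl; rewrite E; apply: cvg_trans; apply: near_eq_cvg; near=> h.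
by rewrite /= ln1 subr0 [h%:A]mulr1 addrC.
Unshelve. all: end_near. Qed.


Lemma exp_quot : h^-1 * (expR h - 1) @[h --> (0:R)^'] --> (1:R).
Proof.
have D : is_derive (0:R) 1 (@expR R) (expR 0) by apply: is_derive_expR.
have := @ex_derive _ _ _ _ _ _ _ D.
rewrite /derivable => /cvg_ex [l Hl].
have E : l = 1.
  have := @derive_val _ _ _ _ _ _ _ D. rewrite expR0 => <-.
  rewrite /derive. by rewrite (cvg_lim _ Hl).
move: Hl; rewrite E; apply: cvg_trans; apply: near_eq_cvg; near=> h.
by rewrite /= expR0 [h%:A]mulr1 addr0.
Unshelve. all: end_near. Qed.

Lemma expN_lim : expR (- h) @[h --> (0:R)^'] --> (1:R).
Proof.
rewrite -expR0 -oppr0.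
apply: (cvg_comp (fun h : R => - h) expR).
  apply: cvgN. exact: cvg_within.
rewrite opprK oppr0; exact: continuous_expR.
Qed.

Lemma sinh_quot : h^-1 * sinh h @[h --> (0:R)^'] --> (1:R).
Proof.
have -> : (fun h : R => h^-1 * sinh h) = (fun h => (h^-1 * (expR h - 1)) * ((1 + expR (- h)) / 2)).
  apply: funext => h; rewrite /sinh.
  have e1 : expR h * expR (- h) = 1 := expRxMexpNx_1 h.
  rewrite !mulrA; congr (_ * _).
  rewrite -mulrA; congr (_ * _); rewrite mulrDr mulr1 mulrBl e1 mul1r.
  by rewrite addrA subrK.
have H := cvgM (exp_quot) (cvgM (cvgD (cvg_cst (1:R)) expN_lim) (cvg_cst (2^-1 : R))).
move: H; rewrite mul1r divff // => H; apply: H; exact: _.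
Qed.

Definition phi (q : R -> R) (h : R) : R := if h == 0 then 1 else q h.

Lemma phi_lim (T : Type) (F : set_system T) (FF : Filter F) (q : R -> R) (f : T -> R) :
  q h @[h --> (0:R)^'] --> (1:R) -> f t @[t --> F] --> (0:R) ->
  phi q (f t) @[t --> F] --> (1:R).
Proof.
move=> Hq Hf.
have H1 : phi q h @[h --> (0:R)^'] --> (1:R).
  apply: cvg_trans Hq; apply: near_eq_cvg; near=> h.
  have : h != 0 by near: h; exact: nbhs_dnbhs_neq.
  by rewrite /phi => /negbTE ->.
have H2 : {for 0, continuous (phi q)}.
  by apply/continuous_withinNx; rewrite /phi eqxx.
apply: (cvg_comp f (phi q) Hf).
move: H2; rewrite /prop_for /continuous_at; have -> : phi q 0 = 1 by rewrite /phi eqxx. done.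
Unshelve. all: end_near. Qed.

Definition phis := phi (fun h : R => h^-1 * sinh h).
Definition phil := phi (fun h : R => h^-1 * ln (1 + h)).

Lemma sinh0 : sinh (0:R) = 0.
Proof. by rewrite /sinh oppr0 subrr mul0r. Qed.

Lemma sinhE (s u : R) : s != 0 -> sinh (s * u) / s = u * phis (s * u).
Proof.
move=> s0; rewrite /phis /phi; case: eqP => [E|/eqP E].
  have u0 : u = 0 by apply/eqP; move/eqP: E; rewrite mulf_eq0 (negbTE s0).
  by rewrite E sinh0 u0 !mul0r.
rewrite invfM; field.
by rewrite s0 andbT; move: E; rewrite mulf_eq0 negb_or => /andP[].
Qed.

Lemma lnE (w : R) : ln (1 + w) = w * phil w.
Proof.
rewrite /phil /phi; case: eqP => [->|/eqP E]; first by rewrite addr0 ln1 mul0r.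
by rewrite mulrA mulfV // mul1r.
Qed.


Lemma Kneg : \forall K \near (0:R)^'-, K < 0.
Proof. exact: nbhs_left_lt. Qed.

Lemma K_lim : K @[K --> (0:R)^'-] --> (0:R).
Proof. apply: cvg_at_left_filter; exact: cvg_id. Qed.

Lemma s_lim : Num.sqrt (- K) @[K --> (0:R)^'-] --> (0:R).
Proof.
apply: (cvg_comp (fun K : R => - K) Num.sqrt).
  apply: cvgN; exact: K_lim.
by have := @sqrt_continuous R 0; rewrite /continuous_at oppr0 sqrtr0.
Qed.

Lemma s_neq0 : \forall K \near (0:R)^'-, Num.sqrt (- K) != 0.
Proof.
near=> K; rewrite gt_eqF // sqrtr_gt0 oppr_gt0.
by near: K; exact: Kneg.
Unshelve. all: end_near. Qed.

Lemma sinh_lim (u : R -> R) (c : R) : u K @[K --> (0:R)^'-] --> c ->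
  sinh (Num.sqrt (- K) * u K) / Num.sqrt (- K) @[K --> (0:R)^'-] --> c.
Proof.
move=> Hu.
have H : u K * phis (Num.sqrt (- K) * u K) @[K --> (0:R)^'-] --> (c * 1 : R).
  apply: cvgM => //; apply: phi_lim; first exact: sinh_quot.
  by have := cvgM s_lim Hu; rewrite mul0r => H; apply: H; exact: _.
rewrite mulr1 in H; apply: cvg_trans H; apply: near_eq_cvg; near=> K.
rewrite /= sinhE //; near: K; exact: s_neq0.
Unshelve. all: end_near. Qed.

Lemma ln_lim (r : R -> R) (c : R) : r K @[K --> (0:R)^'-] --> c ->
  (Num.sqrt (- K))^-1 * ln (1 + Num.sqrt (- K) * r K) @[K --> (0:R)^'-] --> c.
Proof.
move=> Hr.
have H : r K * phil (Num.sqrt (- K) * r K) @[K --> (0:R)^'-] --> (c * 1 : R).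
  apply: cvgM => //; apply: phi_lim; first exact: ln_quot.
  by have := cvgM s_lim Hr; rewrite mul0r => H; apply: H; exact: _.
rewrite mulr1 in H; apply: cvg_trans H; apply: near_eq_cvg; near=> K.
have sK : Num.sqrt (- K) != 0 by near: K; exact: s_neq0.
by rewrite /= lnE mulrA mulKf.
Unshelve. all: end_near. Qed.


Lemma dotvC n (a b : 'rV[R]_n) : dotv a b = dotv b a.
Proof. by apply: eq_bigr => i _; rewrite mulrC. Qed.

Lemma sqnorm_ge0 n (a : 'rV[R]_n) : 0 <= sqnorm a.
Proof. by apply: sumr_ge0 => i _; rewrite -expr2 sqr_ge0. Qed.

Lemma sqnorm_sub n (a b : 'rV[R]_n) (c : R) :
  sqnorm (a - c *: b) = sqnorm a - 2 * c * dotv a b + c ^+ 2 * sqnorm b.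
Proof.
rewrite /sqnorm /dotv !mulr_sumr -sumrB -big_split /=.
by apply: eq_bigr => i _; rewrite !mxE; ring.
Qed.

Lemma keyP (s K d q : R) : s != 0 -> s ^+ 2 = - K -> 1 + K * q != 0 ->
  (1 - 2 * s * d + s ^+ 2 * q) / (1 + K * q) = 1 + s * ((-2 * d + 2 * s * q) / (1 + K * q)).
Proof.
move=> s0 sK D.
have eK : K = - s ^+ 2 by rewrite sK opprK.
move: D; rewrite eK => D; field; done.
Qed.

Lemma busP_lim n (v x : 'rV[R]_n) : sqnorm v = 1 ->
  busemannP K v x @[K --> (0:R)^'-] --> (-2 * dotv v x).
Proof.
move=> hv; set d := dotv v x; set q := sqnorm x.
have HD : (1 + K * q) @[K --> (0:R)^'-] --> (1 + 0 * q).
  apply: cvgD; first exact: cvg_cst.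
  apply: cvgM; [exact: K_lim | exact: cvg_cst].
have Hr : (-2 * d + 2 * Num.sqrt (- K) * q) / (1 + K * q) @[K --> (0:R)^'-]
    --> ((-2 * d + 2 * 0 * q) / (1 + 0 * q)).
  apply: cvgM.
    apply: cvgD; first exact: cvg_cst.
    apply: cvgM; last exact: cvg_cst.
    apply: cvgM; [exact: cvg_cst | exact: s_lim].
  apply: cvgV => //; by rewrite mul0r addr0 oner_neq0.
rewrite mulr0 !mul0r !addr0 invr1 mulr1 in Hr.
apply: cvg_trans (ln_lim _ _ Hr); apply: near_eq_cvg; near=> K.
rewrite /= /busemannP sqnorm_sub hv keyP //.
- by near: K; exact: s_neq0.
- rewrite sqr_sqrtr // oppr_ge0; apply: ltW; near: K; exact: Kneg.
- apply: lt0r_neq0; near: K. apply: (@cvgr_gt R _ _ _ _ _ HD). by rewrite mul0r addr0 ltr01.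
Unshelve. all: end_near. Qed.


Lemma sqrt_lim (T : Type) (F : set_system T) (FF : Filter F) (f : T -> R) (c : R) :
  f t @[t --> F] --> c -> Num.sqrt (f t) @[t --> F] --> Num.sqrt c.
Proof. move=> Hf; exact: (cvg_comp f Num.sqrt Hf (@sqrt_continuous R c)). Qed.

Lemma keyL (s K q d T : R) : T + 1 != 0 -> T ^+ 2 = 1 - K * q -> s ^+ 2 = - K ->
  T - s * d = 1 + s * (s * q / (T + 1) - d).
Proof.
move=> D HT hs; apply/eqP; rewrite -subr_eq0.
have -> : T - s * d - (1 + s * (s * q / (T + 1) - d)) = (T ^+ 2 - 1 - s ^+ 2 * q) / (T + 1).
  by field.
rewrite HT hs.
have -> : 1 - K * q - 1 - - K * q = 0 by ring.
by rewrite mul0r.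
Qed.

Lemma busL_lim n (v xs : 'rV[R]_n) :
  busemannL K v (timeL K xs) xs @[K --> (0:R)^'-] --> (- dotv xs v).
Proof.
set d := dotv xs v; set q := sqnorm xs.
have HT : Num.sqrt (1 - K * q) @[K --> (0:R)^'-] --> Num.sqrt (1 - 0 * q).
  apply: sqrt_lim; apply: cvgB; first exact: cvg_cst.
  apply: cvgM; [exact: K_lim | exact: cvg_cst].
have Hr : Num.sqrt (- K) * q / (Num.sqrt (1 - K * q) + 1) - d @[K --> (0:R)^'-]
    --> (0 * q / (Num.sqrt (1 - 0 * q) + 1) - d).
  apply: cvgB; last exact: cvg_cst.
  apply: cvgM.
    apply: cvgM; [exact: s_lim | exact: cvg_cst].
  apply: cvgV.
    apply/eqP => E; have := sqrtr_ge0 (1 - 0 * q); lra.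
  apply: cvgD => //; exact: cvg_cst.
rewrite !mul0r sub0r in Hr.
apply: cvg_trans (ln_lim _ _ Hr); apply: near_eq_cvg; near=> K.
have K0 : K < 0 by near: K; exact: Kneg.
have q0 : 0 <= q by exact: sqnorm_ge0.
have nK : 0 <= - K by rewrite oppr_ge0 ltW.
have Kq : 0 <= 1 - K * q by have := mulr_ge0 nK q0; rewrite mulNr; lra.
rewrite /= /busemannL /timeL -/q -/d; congr (_ * ln _); rewrite [RHS]mulrBr.
have -> : Num.sqrt (- K) * Num.sqrt (- K^-1 + q) = Num.sqrt (1 - K * q).
  rewrite -sqrtrM; last by rewrite oppr_ge0 ltW.
  congr Num.sqrt; field; exact: ltr0_neq0.
have T1 : Num.sqrt (1 - K * q) + 1 != 0.
  apply/eqP => E; have := sqrtr_ge0 (1 - K * q); lra.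
have T2 : Num.sqrt (1 - K * q) ^+ 2 = 1 - K * q by rewrite sqr_sqrtr.
have T3 : Num.sqrt (- K) ^+ 2 = - K by rewrite sqr_sqrtr.
by rewrite (keyL _ _ _ d _ T1 T2 T3).
Unshelve. all: end_near. Qed.

End S.

Theorem theorem5 (R : realType) (n m : nat) (hn : (1 <= n)%N) (hm : (1 <= m)%N)
  (alpha : 'I_m -> R) (v : 'I_m -> 'rV[R]_n) (b : 'I_m -> R)
  (halpha : forall k, 0 < alpha k)
  (hv : forall k, sqnorm (v k) = 1) :
  (forall (x : 'rV[R]_n) (k : 'I_m),
     yP alpha b v K x ord0 k @[K --> 0^'-]
       --> alpha k * dotv (v k) x + b k / 2) /\
  (forall (xs : 'rV[R]_n) (k : 'I_m),
     ysL alpha b v K xs ord0 k @[K --> 0^'-]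
       --> alpha k * dotv (v k) xs + b k).
Proof.
split.
- move=> x k.
  pose c j := - alpha j * (-2 * dotv (v j) x) + b j.
  have Hu : forall j, uP alpha b v K x j @[K --> (0:R)^'-] --> c j.
    move=> j; rewrite /uP /c; apply: cvgD; last exact: cvg_cst.
    apply: cvgM; first exact: cvg_cst.
    exact: busP_lim.
  have Hw : forall j, omegaP alpha b v K x ord0 j @[K --> (0:R)^'-] --> c j.
    move=> j; apply: cvg_trans (sinh_lim _ _ _ (Hu j)); apply: near_eq_cvg; near=> K.
    by rewrite /omegaP mxE.
  have HS : sqnorm (omegaP alpha b v K x) @[K --> (0:R)^'-] --> \sum_(j < m) c j * c j.
    rewrite /sqnorm /dotv; apply: cvg_big => //.
      exact: add_continuous.
    by move=> j _; apply: cvgM; exact: Hw.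
  have L : yP alpha b v K x ord0 k @[K --> (0:R)^'-] -->
      ((1 + Num.sqrt (1 - 0 * \sum_(j < m) c j * c j))^-1 * c k).
    have L' : (1 + Num.sqrt (1 - K * sqnorm (omegaP alpha b v K x)))^-1 *
        omegaP alpha b v K x ord0 k @[K --> (0:R)^'-] -->
        ((1 + Num.sqrt (1 - 0 * \sum_(j < m) c j * c j))^-1 * c k).
      apply: cvgM; last exact: Hw.
      apply: cvgV.
        by rewrite mul0r subr0 sqrtr1 -[X in X != 0]/(2%:R) pnatr_eq0.
      apply: cvgD; first exact: cvg_cst.
      apply: sqrt_lim; apply: cvgB; first exact: cvg_cst.
      apply: cvgM; [exact: K_lim | exact: HS].
    apply: cvg_trans L'.
    apply: near_eq_cvg; near=> K.
    by rewrite /yP [RHS]mxE.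
  have E : (1 + Num.sqrt (1 - 0 * \sum_(j < m) c j * c j))^-1 * c k
      = alpha k * dotv (v k) x + b k / 2.
    by rewrite mul0r subr0 sqrtr1 /c; field.
  by rewrite -E.
- move=> xs k.
  have Hu : uL alpha b v K (timeL K xs) xs k @[K --> (0:R)^'-] -->
      (- alpha k * (- dotv xs (v k)) + b k).
    rewrite /uL; apply: cvgD; last exact: cvg_cst.
    apply: cvgM; first exact: cvg_cst.
    exact: busL_lim.
  have E : - alpha k * (- dotv xs (v k)) + b k = alpha k * dotv (v k) xs + b k.
    by rewrite mulrN mulNr opprK dotvC.
  rewrite -E; apply: cvg_trans (sinh_lim _ _ _ Hu); apply: near_eq_cvg; near=> K.
  by rewrite /ysL mxE.
Unshelve. all: end_near. Qed.
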